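(* Let $p>5$ be a prime, $q=p^h$, and let $\mathcal{F}$ be the projective closure of $ax^ny^m+x^n+y^m=1$ over $\mathbb{F}_q$, where $a\in\mathbb{F}_q$, $a\ne0$, $a\neq-1$, and $m,n$ are positive integers with $p\nmid mn$, $n\ge m$, $\min\{m,n\}>2$. If $\mathcal{F}$ is nonclassical with respect to conics, then $p\mid(n+1)(n-1)$ and $p\mid(m+1)(m-1)$.
   Context: With $\varphi_0,\dots,\varphi_5$ the monomials of degree 2 in $x,y,1$, $\tau$ separating and $D^{(k)}_\tau$ Hasse derivatives, the order sequence w.r.t. conics is the lexicographically smallest $\varepsilon_0<\dots<\varepsilon_5$ with $\det(D^{(\varepsilon_i)}_\tau\varphi_j)\ne0$; the curve is classical w.r.t. conics if $\varepsilon_i=i$ for all $i$, nonclassical otherwise. *)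

(* Defs.v *)
From HB Require Import structures.
From mathcomp Require Import all_boot all_order all_algebra.
Set Implicit Arguments. Unset Strict Implicit. Unset Printing Implicit Defensive.
Import Order.TTheory GRing.Theory Num.Theory.
Local Open Scope ring_scope.

(* Setting: K is a field containing a copy (via the ring morphism [f]) of the
   constant field F; x, y in K are the coordinate functions of the curve.
   [D k] is the k-th Hasse derivative with respect to the separating
   variable x: an (iterative) Hasse--Schmidt higher derivation of K which
   is trivial on the constants and satisfies D^(1) x = 1, D^(k) x = 0 (k>=2). *)
Definition is_hasse_wrt (F K : fieldType) (f : {rmorphism F -> K}) (x : K)
    (D : nat -> K -> K) : Prop :=
  (forall u, D 0%N u = u) /\
  (forall k u v, D k (u + v) = D k u + D k v) /\
  (forall k u v, D k (u * v) = \sum_(i < k.+1) D i u * D (k - i)%N v) /\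
  (forall k c, (0 < k)%N -> D k (f c) = 0) /\
  D 1%N x = 1 /\
  (forall k, (1 < k)%N -> D k x = 0) /\
  (forall i j u, D i (D j u) = ('C(i + j, i))%:R * D (i + j)%N u).

Definition transcendental_over (F K : fieldType) (f : {rmorphism F -> K}) (x : K) :=
  forall P : {poly F}, P != 0 -> (map_poly f P).[x] != 0.

Definition conic_basis (K : fieldType) (x y : K) (j : 'I_6) : K :=
  nth 0 [:: 1; x; y; x ^+ 2; x * y; y ^+ 2] j.

Definition conic_wronskian (K : fieldType) (D : nat -> K -> K) (x y : K)
    (e : 'I_6 -> nat) : 'M[K]_6 :=
  \matrix_(i, j) D (e i) (conic_basis x y j).

Definition conic_admissible (K : fieldType) (D : nat -> K -> K) (x y : K)
    (e : 'I_6 -> nat) : Prop :=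
  (forall i j : 'I_6, (i < j)%N -> (e i < e j)%N) /\
  \det (conic_wronskian D x y e) != 0.

Definition lex_lt6 (e e' : 'I_6 -> nat) : Prop :=
  exists i : 'I_6, (forall j : 'I_6, (j < i)%N -> e j = e' j) /\ (e i < e' i)%N.

Definition is_conic_order_seq (K : fieldType) (D : nat -> K -> K) (x y : K)
    (e : 'I_6 -> nat) : Prop :=
  conic_admissible D x y e /\
  forall e', conic_admissible D x y e' -> (forall i, e i = e' i) \/ lex_lt6 e e'.

Definition classical_wrt_conics (K : fieldType) (D : nat -> K -> K) (x y : K) : Prop :=
  forall e, is_conic_order_seq D x y e -> forall i : 'I_6, e i = i.

Definition nonclassical_wrt_conics (K : fieldType) (D : nat -> K -> K) (x y : K) : Prop :=
  ~ classical_wrt_conics D x y.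

(* Main.v *)
Require Import Defs.
From HB Require Import structures.
From mathcomp Require Import all_boot all_order all_algebra.
From mathcomp Require Import ring.
Set Implicit Arguments. Unset Strict Implicit. Unset Printing Implicit Defensive.
Import Order.TTheory GRing.Theory Num.Theory.
Local Open Scope ring_scope.

Fixpoint Pk_rec (F : fieldType) (N c : F) (Q : {poly F}) (k : nat) : {poly F} :=
  match k with
  | 0%N => 1
  | k'.+1 => N *: ('X * Q * (Pk_rec N c Q k')^`()) + c *: ('X * Pk_rec N c Q k')
             - ((Q + N *: ('X * Q^`())) * Pk_rec N c Q k') *+ k'
  end.

Definition Pk (F : fieldType) (N c : F) (Q : {poly F}) (k : nat) : {poly F} :=
  locked (Pk_rec N c Q k).

Lemma Pk0 (F : fieldType) (N c : F) Q : Pk N c Q 0 = 1.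
Proof. by rewrite /Pk -lock. Qed.


Definition Gp (F : fieldType) (N c : F) (Q : {poly F}) : {poly F} :=
  40%:R *: (Pk N c Q 3 ^+ 3) - 45%:R *: (Pk N c Q 2 * Pk N c Q 3 * Pk N c Q 4)
  + 9%:R *: (Pk N c Q 2 ^+ 2 * Pk N c Q 5).

Lemma PkS (F : fieldType) (N c : F) Q k : Pk N c Q k.+1 =
  N *: ('X * Q * (Pk N c Q k)^`()) + c *: ('X * Pk N c Q k)
             - ((Q + N *: ('X * Q^`())) * Pk N c Q k) *+ k.
Proof. by rewrite /Pk -!lock. Qed.

Lemma hornerOne (R : nzRingType) (x : R) : (1 : {poly R}).[x] = 1.
Proof. by rewrite -polyC1 hornerC. Qed.

Ltac hsimp := rewrite ?(hornerOne, horner0, hornerD, hornerN, hornerZ, hornerM, hornerX, hornerC, horner_exp, hornerXn, hornerMX, hornerMn).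

Lemma Pk_root (F : fieldType) (N c : F) Q r k : Q.[r] = 0 ->
  (Pk N c Q k.+1).[r] = (c * r - k%:R * N * r * Q^`().[r]) * (Pk N c Q k).[r].
Proof. move=> Qr; rewrite PkS; hsimp; rewrite Qr; ring. Qed.

Lemma Pk_low (F : fieldType) (N c : F) Q k R : Pk N c Q k = 'X * R ->
  exists R', Pk N c Q k.+1 = 'X * R' /\ R'.[0] = Q.[0] * (N - k%:R) * R.[0].
Proof.
move=> hR; exists (N *: (Q * (R + 'X * R^`())) + c *: ('X * R)
   - ((Q + N *: ('X * Q^`())) * R) *+ k); split.
  by rewrite PkS hR derivM derivX mul1r -!mul_polyC; ring.
by hsimp; ring.
Qed.
Lemma Pk1 (F : fieldType) (N c : F) Q : Pk N c Q 1 = 'X * c%:P.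
Proof. by rewrite PkS Pk0 -polyC1 derivC !mulr0 scaler0 add0r mulr0n subr0 -mul_polyC mulrC mulr1. Qed.

Lemma Gp_low (F : fieldType) (N c : F) Q :
  exists H, Gp N c Q = 'X^3 * H /\
     H.[0] = c^+3 * Q.[0]^+6 * (N - 1)^+3 * (N - 2%:R) * (2%:R * (2%:R * N - 1) * (N + 1)).
Proof.
have [R2 [e2 v2]] := Pk_low (Pk1 N c Q).
have [R3 [e3 v3]] := Pk_low e2.
have [R4 [e4 v4]] := Pk_low e3.
have [R5 [e5 v5]] := Pk_low e4.
exists (40%:R *: R3 ^+ 3 - 45%:R *: (R2 * R3 * R4) + 9%:R *: (R2 ^+ 2 * R5)); split.
  rewrite /Gp e2 e3 e4 e5 -!mul_polyC; clear e2 e3 e4 e5 v2 v3 v4 v5.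
  move: (40%:R%:P) (45%:R%:P) (9%:R%:P) ('X : {poly F}) R2 R3 R4 R5 => A B C X Y2 Y3 Y4 Y5.
  ring.
hsimp; rewrite v5 v4 v3 v2 hornerC; ring.
Qed.

Lemma P2_low (F : fieldType) (N c : F) Q :
  exists R, Pk N c Q 2 = 'X * R /\ R.[0] = Q.[0] * (N - 1) * c.
Proof.
have [R2 [e2 v2]] := Pk_low (Pk1 N c Q).
by exists R2; split => //; rewrite v2 hornerC.
Qed.

Lemma Gp_root (F : fieldType) (N c : F) Q r : Q.[r] = 0 ->
  let b j := c * r - j%:R * N * r * Q^`().[r] in
  (Gp N c Q).[r] = b 0%N ^+ 3 * b 1%N ^+ 3 * b 2%N *
     (40%:R * b 2%N ^+ 2 - 45%:R * b 2%N * b 3%N + 9%:R * b 3%N * b 4%N).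
Proof.
move=> hr b; rewrite /Gp; hsimp.
rewrite (@Pk_root _ N c Q r 4 hr) (@Pk_root _ N c Q r 3 hr) (@Pk_root _ N c Q r 2 hr) (@Pk_root _ N c Q r 1 hr) (@Pk_root _ N c Q r 0 hr) Pk0 -polyC1 hornerC /b; ring.
Qed.

Lemma P2_root (F : fieldType) (N c : F) Q r : Q.[r] = 0 ->
  (Pk N c Q 2).[r] = (c * r) * (c * r - N * r * Q^`().[r]).
Proof. move=> hr; rewrite (@Pk_root _ N c Q r 1 hr) (@Pk_root _ N c Q r 0 hr) Pk0 -polyC1 hornerC; ring. Qed.
Lemma th_horner (F K : fieldType) (f : {rmorphism F -> K}) (th : K -> K)
  (thD : forall u v, th (u + v) = th u + th v)
  (thM : forall u v, th (u * v) = th u * v + u * th v)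
  (thC : forall c, th (f c) = 0) (s : K) (N : F) (hs : th s = f N * s) P :
  th ((map_poly f P).[s]) = f N * s * (map_poly f P^`()).[s].
Proof.
elim/poly_ind: P => [|P c IH].
  by rewrite deriv0 !rmorph0 horner0 -(rmorph0 f) thC rmorph0 mulr0.
rewrite derivMXaddC !(rmorphD, rmorphM) /= map_polyX map_polyC.
hsimp; rewrite thD thC thM IH hs; ring.
Qed.

Lemma th_exp (K : fieldType) (th : K -> K)
  (thM : forall u v, th (u * v) = th u * v + u * th v)
  (th1 : th 1 = 0) (z : K) k :
  th (z ^+ k) * z = k%:R * z ^+ k * th z.
Proof.
elim: k => [|k IH]; first by rewrite expr0 th1 mul0r; ring.
rewrite exprS thM.
transitivity (th z * z ^+ k * z + z * (th (z ^+ k) * z)); first by ring.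
by rewrite IH -natr1; ring.
Qed.

Lemma key_id (F K : fieldType) (f : {rmorphism F -> K}) (th : K -> K)
  (thD : forall u v, th (u + v) = th u + th v)
  (thM : forall u v, th (u * v) = th u * v + u * th v)
  (thC : forall c, th (f c) = 0) (s y : K) (N c : F) (Q : {poly F})
  (hs : th s = f N * s) (hy : (map_poly f Q).[s] * th y = f c * s * y)
  (u : nat -> K) (u0 : u 0%N = y) (uS : forall k, th (u k) = k%:R * u k + u k.+1) k :
  (map_poly f Q).[s] ^+ k * u k = (map_poly f (Pk N c Q k)).[s] * y.
Proof.
have th1 : th 1 = 0 by have := thC 1; rewrite rmorph1.
set q := (map_poly f Q).[s].
elim: k => [|k IH]; first by rewrite expr0 mul1r u0 Pk0 rmorph1 hornerOne mul1r.
have H1 := congr1 th IH.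
rewrite thM thM (th_horner thD thM thC hs) in H1.
have T : th (q ^+ k) * q * u k = k%:R * th q * (q ^+ k * u k).
  rewrite th_exp //; ring.
have -> : u k.+1 = th (u k) - k%:R * u k by rewrite uS; ring.
transitivity (q * (th (q ^+ k) * u k + q ^+ k * th (u k)) - th (q ^+ k) * q * u k
   - k%:R * q * (q ^+ k * u k)); first by rewrite exprS; ring.
rewrite H1 T IH /q (th_horner thD thM thC hs).
set P := (map_poly f (Pk N c Q k)).[s].
set P' := (map_poly f (Pk N c Q k)^`()).[s].
rewrite -/q.
transitivity (q * (f N * s * P') * y + P * (q * th y)
   - k%:R * (f N * s * (map_poly f Q^`()).[s]) * (P * y) - k%:R * q * (P * y)); first by ring.
rewrite hy PkS -!mul_polyC !(rmorphD, rmorphB, rmorphN, rmorphM) /= !map_polyC map_polyX.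
hsimp; rewrite raddfMn /= !(rmorphD, rmorphM) /= map_polyC map_polyX; hsimp; rewrite -/q -/P -/P' -mulr_natr; ring.
Qed.
Ltac nz := repeat first [ apply: mulf_neq0 | apply: expf_neq0 | rewrite oppr_eq0 | rewrite invr_eq0 ]; try done.

Lemma natF_neq0 (F : fieldType) p k : p \in [pchar F] -> ~~ (p %| k)%N -> k%:R != 0 :> F.
Proof. by move=> pF; rewrite (dvdn_pcharf pF). Qed.

Lemma small_neq0 (F : fieldType) p k : p \in [pchar F] -> (0 < k < p)%N -> k%:R != 0 :> F.
Proof.
move=> pF /andP [k0 kp]; apply: (natF_neq0 pF); apply/negP => /(dvdn_leq k0).
by rewrite leqNgt kp.
Qed.

Lemma contra25 (F : fieldType) (M : F) : 2%:R != 0 :> F -> 5%:R != 0 :> F ->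
  (2%:R * M - 1) * (M - 2%:R) = 0 -> (2%:R * M + 1) * (M + 2%:R) = 0 -> False.
Proof.
move=> h2 h5 /eqP; rewrite mulf_eq0 => /orP [] /eqP e1 /eqP; rewrite mulf_eq0 => /orP [] /eqP e2.
- move/eqP: h2; apply; have -> : (2%:R : F) = (2%:R * M + 1) - (2%:R * M - 1) by ring.
  by rewrite e1 e2 subrr.
- move/eqP: h5; apply; have -> : (5%:R : F) = 2%:R * (M + 2%:R) - (2%:R * M - 1) by ring.
  by rewrite e1 e2 mulr0 subrr.
- move/eqP: h5; apply; have -> : (5%:R : F) = (2%:R * M + 1) - 2%:R * (M - 2%:R) by ring.
  by rewrite e1 e2 mulr0 subrr.
- have h4 : (4%:R : F) != 0.
    by rewrite (_ : 4%:R = 2%:R * 2%:R :> F) ?mulf_neq0 //; ring.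
  move/eqP: h4; apply; have -> : (4%:R : F) = (M + 2%:R) - (M - 2%:R) by ring.
  by rewrite e1 e2 subrr.
Qed.

Lemma m_case (F : fieldType) p (a N M : F) : p \in [pchar F] -> (5 < p)%N ->
  a != 0 -> 1 + a != 0 -> N != 0 -> M != 0 -> M + 1 != 0 -> M - 1 != 0 ->
  Pk N (-(N * (1 + a)) / M) ((1 - 'X) * (1 + a%:P * 'X)) 2 != 0 /\
  Gp N (-(N * (1 + a)) / M) ((1 - 'X) * (1 + a%:P * 'X)) != 0.
Proof.
move=> pF p5 a0 a1 N0 M0 Mp Mm.
have h2 : (2%:R : F) != 0 by apply: (small_neq0 pF); rewrite /= (leq_trans _ p5).
have h5 : (5%:R : F) != 0 by apply: (small_neq0 pF); rewrite /= (leq_trans _ p5).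
set c := -(N * (1 + a)) / M; set Q := (1 - 'X) * (1 + a%:P * 'X).
have Q1 : Q.[1] = 0 by rewrite /Q; hsimp; ring.
have dQ1 : Q^`().[1] = -(1 + a).
  by rewrite /Q !derivE; hsimp; ring.
have Qr : Q.[- a^-1] = 0 by rewrite /Q; hsimp; field.
have dQr : Q^`().[- a^-1] = 1 + a.
  by rewrite /Q !derivE; hsimp; field.
have L0 : N * (1 + a) / M != 0 by apply: mulf_neq0; [apply: mulf_neq0 | rewrite invr_eq0].
split.
  apply/negP => /eqP h; have := P2_root N c Q1; rewrite h horner0 dQ1.
  have -> : c * 1 * (c * 1 - N * 1 * - (1 + a)) = - ((N * (1 + a) / M) ^+ 2 * (M - 1)).
    by rewrite /c; field.
  by move/eqP; rewrite eq_sym oppr_eq0 (negbTE (mulf_neq0 (expf_neq0 2 L0) Mm)).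
apply/negP => /eqP h.
have := Gp_root N c Q1; rewrite /= h horner0 dQ1 => /esym.
set lhs := (X in X = 0).
have -> : lhs = (2%:R * (N * (1 + a) / M) ^+ 9 * (M - 1) ^+ 3 * (M + 1)) * ((2%:R * M - 1) * (M - 2%:R)).
  by rewrite /lhs /c; field.
move/eqP; rewrite mulf_eq0 => /orP [|/eqP E1].
  by apply/negP; nz.
have := Gp_root N c Qr; rewrite /= h horner0 dQr => /esym.
set lhs2 := (X in X = 0).
have -> : lhs2 = (- 2%:R * (N * (1 + a) / M / a) ^+ 9 * (M + 1) ^+ 3 * (M - 1)) * ((2%:R * M + 1) * (M + 2%:R)).
  by rewrite /lhs2 /c; field; rewrite a0 M0.
move/eqP; rewrite mulf_eq0 => /orP [|/eqP E2].
  by apply/negP; nz.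
exact: (contra25 h2 h5 E1 E2).
Qed.

Lemma Xn_mul_eq0 (F : fieldType) k (H : {poly F}) : 'X^k * H = 0 -> H.[0] = 0.
Proof. by move/eqP; rewrite mulf_eq0 expf_eq0 polyX_eq0 andbF /= => /eqP ->; rewrite horner0. Qed.

Lemma n_case (F : fieldType) p (a N M : F) : p \in [pchar F] -> (5 < p)%N ->
  a != 0 -> 1 + a != 0 -> N != 0 -> M != 0 -> N + 1 != 0 -> N - 1 != 0 ->
  Pk N (-(N * (1 + a)) / M) ((1 - 'X) * (1 + a%:P * 'X)) 2 != 0 /\
  (Gp N (-(N * (1 + a)) / M) ((1 - 'X) * (1 + a%:P * 'X)) != 0 \/
   Gp (- N) (-(N * (1 + a)) / M) (('X - 1) * ('X + a%:P)) != 0).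
Proof.
move=> pF p5 a0 a1 N0 M0 Np Nm.
have h2 : (2%:R : F) != 0 by apply: (small_neq0 pF); rewrite /= (leq_trans _ p5).
have h5 : (5%:R : F) != 0 by apply: (small_neq0 pF); rewrite /= (leq_trans _ p5).
set c := -(N * (1 + a)) / M; set Q := (1 - 'X) * (1 + a%:P * 'X).
set Qt := ('X - 1) * ('X + a%:P).
have Q0 : Q.[0] = 1 by rewrite /Q; hsimp; ring.
have Qt0 : Qt.[0] = - a by rewrite /Qt; hsimp; ring.
have c0 : c != 0 by rewrite /c; nz.
split.
  have [R [-> v]] := P2_low N c Q.
  apply/negP => /eqP h; have := Xn_mul_eq0 (k := 1) (H := R); rewrite expr1 => /(_ h).
  by rewrite v Q0 mul1r; apply/eqP; nz.
apply/orP; rewrite -negb_and; apply/negP => /andP [g1 g2].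
move: g1 g2; rewrite ?negbK ?eqb_id => /eqP g1 /eqP g2.
have [H1 [e1 v1]] := Gp_low N c Q.
have [H2 [e2 v2]] := Gp_low (- N) c Qt.
have := Xn_mul_eq0 (k := 3) (H := H1); rewrite -e1 => /(_ g1); rewrite v1 Q0 => /eqP.
have -> : c ^+ 3 * 1 ^+ 6 * (N - 1) ^+ 3 * (N - 2%:R) * (2%:R * (2%:R * N - 1) * (N + 1))
   = (c ^+ 3 * (N - 1) ^+ 3 * 2%:R * (N + 1)) * ((2%:R * N - 1) * (N - 2%:R)) by ring.
rewrite mulf_eq0 => /orP [|/eqP E1]; first by apply/negP; nz.
have := Xn_mul_eq0 (k := 3) (H := H2); rewrite -e2 => /(_ g2); rewrite v2 Qt0 => /eqP.
have -> : c ^+ 3 * (- a) ^+ 6 * (- N - 1) ^+ 3 * (- N - 2%:R) * (2%:R * (2%:R * - N - 1) * (- N + 1))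
   = (c ^+ 3 * a ^+ 6 * (N + 1) ^+ 3 * 2%:R * (N - 1)) * ((2%:R * N + 1) * (N + 2%:R)) by ring.
rewrite mulf_eq0 => /orP [|/eqP E2]; first by apply/negP; nz.
exact: (contra25 h2 h5 E1 E2).
Qed.
Lemma det3E (K : comNzRingType) (g : nat -> nat -> K) :
  \det (\matrix_(i < 3, j < 3) g i j) = g 0%N 0%N * (g 1%N 1%N * g 2%N 2%N - g 2%N 1%N * g 1%N 2%N)
         - g 1%N 0%N * (g 0%N 1%N * g 2%N 2%N - g 2%N 1%N * g 0%N 2%N)
         + g 2%N 0%N * (g 0%N 1%N * g 1%N 2%N - g 1%N 1%N * g 0%N 2%N).
Proof.
rewrite (expand_det_col _ 0) !big_ord_recl big_ord0 /cofactor.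
rewrite !(expand_det_col _ 0) !big_ord_recl !big_ord0 /cofactor !det_mx11 !mxE /=.

ring.
Qed.

Lemma minor0 (K : comNzRingType) n m (g : nat -> nat -> K) (j0 : 'I_m.+1) :
  row' ord0 (col' j0 (\matrix_(i < n.+1, j < m.+1) g i j)) =
  \matrix_(i < n, j < m) g i.+1 (bump j0 j).
Proof. by apply/matrixP => i j; rewrite !mxE. Qed.

Lemma det6E (K : comNzRingType) (g : nat -> nat -> K) :
  g 0%N 0%N = 1 -> g 1%N 0%N = 0 -> g 2%N 0%N = 0 -> g 3%N 0%N = 0 -> g 4%N 0%N = 0 -> g 5%N 0%N = 0 ->
  g 1%N 1%N = 1 -> g 2%N 1%N = 0 -> g 3%N 1%N = 0 -> g 4%N 1%N = 0 -> g 5%N 1%N = 0 ->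
  g 2%N 3%N = 1 -> g 3%N 3%N = 0 -> g 4%N 3%N = 0 -> g 5%N 3%N = 0 ->
  \det (\matrix_(i < 6, j < 6) g i j) =
    - (g 3%N 2%N * (g 4%N 4%N * g 5%N 5%N - g 5%N 4%N * g 4%N 5%N)
         - g 4%N 2%N * (g 3%N 4%N * g 5%N 5%N - g 5%N 4%N * g 3%N 5%N)
         + g 5%N 2%N * (g 3%N 4%N * g 4%N 5%N - g 4%N 4%N * g 3%N 5%N)).
Proof.
move=> h00 h10 h20 h30 h40 h50 h11 h21 h31 h41 h51 h23 h33 h43 h53.
rewrite (expand_det_col _ 0) !big_ord_recl big_ord0 !mxE /=.
rewrite h00 h10 h20 h30 h40 h50 !mul0r !addr0 /cofactor minor0 /=.
rewrite (expand_det_col _ 0) !big_ord_recl big_ord0 !mxE /=.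
rewrite h11 h21 h31 h41 h51 !mul0r !addr0 /cofactor (@minor0 _ _ _ (fun a b => g a.+1 (bump 0 b)) _) /=.
rewrite (expand_det_col _ 1) !big_ord_recl big_ord0 !mxE /=.
rewrite h23 h33 h43 h53 !mul0r !addr0 /cofactor.
rewrite (@minor0 _ _ _ (fun a b => g a.+2 (bump 0 (bump 0 b))) _) /=.
rewrite (det3E (fun a b => g a.+3 (bump 1 b).+2)) /=.
ring.
Qed.
Lemma wr_det (F K : fieldType) (f : {rmorphism F -> K}) (x y : K) (D : nat -> K -> K) :
  is_hasse_wrt f x D ->
  \det (conic_wronskian D x y (fun i => i)) =
  - (D 2%N y * (2%:R * D 3%N y ^+ 3 - 3%:R * D 2%N y * D 3%N y * D 4%N y + D 2%N y ^+ 2 * D 5%N y)).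
Proof.
case=> [D0 [DD [DM [DC [D1x [Dx2 Dit]]]]]].
have d1 k : (0 < k)%N -> D k 1 = 0.
  by move=> k0; have := DC k 1 k0; rewrite rmorph1.
have dx2 := Dx2 2%N erefl; have dx3 := Dx2 3%N erefl.
have dx4 := Dx2 4%N erefl; have dx5 := Dx2 5%N erefl.
rewrite /conic_wronskian /conic_basis.
rewrite (@det6E _ (fun a b => D a (nth 0 [:: 1; x; y; x ^+ 2; x * y; y ^+ 2] b))) /=.
- rewrite !expr2 !DM !big_ord_recl !big_ord0 /= !D0 D1x dx2 dx3 dx4 dx5.
  ring.
all: rewrite /= ?expr2 ?DM ?big_ord_recl ?big_ord0 /= ?D0 ?D1x ?d1 ?dx2 ?dx3 ?dx4 ?dx5 //; ring.
Qed.
Lemma trans_Xn (F K : fieldType) (f : {rmorphism F -> K}) (x : K) n :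
  transcendental_over f x -> (0 < n)%N ->
  forall P : {poly F}, P != 0 -> (map_poly f P).[x ^+ n] != 0.
Proof.
move=> tr n0 P P0.
have -> : (map_poly f P).[x ^+ n] = (map_poly f (P \Po 'X^n)).[x].
  by rewrite map_comp_poly map_polyXn horner_comp hornerXn.
apply: tr; apply/negP => /eqP h.
have := congr1 (fun q : {poly F} => q`_(n * (size P).-1)) h.
rewrite /= coef_comp_poly_Xn // dvdn_mulr // mulKn // coef0.
by move/eqP; rewrite -/(lead_coef P) lead_coef_eq0 (negbTE P0).
Qed.

Lemma trans_inv (F K : fieldType) (f : {rmorphism F -> K}) (s : K) :
  s != 0 -> (forall P : {poly F}, P != 0 -> (map_poly f P).[s] != 0) ->
  forall P : {poly F}, P != 0 -> (map_poly f P).[s^-1] != 0.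
Proof.
move=> s0 tr P P0.
case sP: (size P) => [|d]; first by move/eqP: sP; rewrite size_poly_eq0 (negbTE P0).
set R := \poly_(i < d.+1) P`_(d - i).
have R0 : R != 0.
  apply/negP => /eqP h; have := congr1 (fun q : {poly F} => q`_0) h.
  rewrite /R coef_poly /= coef0 subn0 => /eqP.
  have -> : d = (size P).-1 by rewrite sP.
  by rewrite -/(lead_coef P) lead_coef_eq0 (negbTE P0).
have e : s ^+ d * (map_poly f P).[s^-1] = (map_poly f R).[s].
  rewrite horner_coef size_map_poly sP big_distrr /=.
  rewrite (horner_coef_wide (n := d.+1)); last first.
    by rewrite size_map_poly /R size_poly.
  rewrite (reindex_inj rev_ord_inj) /=; apply: eq_bigr => i _.
  rewrite !coef_map /R coef_poly /= subSS ltn_ord.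
  have hi : (i <= d)%N by rewrite -ltnS.
  rewrite mulrCA; congr (_ * _).
  rewrite -{1}(subnK hi) exprD exprVn mulrAC mulfV ?mul1r //.
  by rewrite expf_neq0.
apply/negP => /eqP h; move: e; rewrite h mulr0 => /esym/eqP.
by apply/negP; apply: tr.
Qed.
Lemma ev_Gp (F K : fieldType) (f : {rmorphism F -> K}) (s : K) (N c : F) Q :
  (map_poly f (Gp N c Q)).[s] =
  40%:R * (map_poly f (Pk N c Q 3)).[s] ^+ 3
  - 45%:R * ((map_poly f (Pk N c Q 2)).[s] * (map_poly f (Pk N c Q 3)).[s] * (map_poly f (Pk N c Q 4)).[s])
  + 9%:R * ((map_poly f (Pk N c Q 2)).[s] ^+ 2 * (map_poly f (Pk N c Q 5)).[s]).
Proof.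
rewrite /Gp rmorphD rmorphB /= !map_polyZ /= !rmorphM /=; hsimp.
rewrite !rmorph_nat; ring.
Qed.

Lemma monge_link (K : fieldType) (q y u2 u3 u4 u5 e2 e3 e4 e5 : K) :
  q ^+ 2 * u2 = e2 * y -> q ^+ 3 * u3 = e3 * y -> q ^+ 4 * u4 = e4 * y -> q ^+ 5 * u5 = e5 * y ->
  q ^+ 9 * (40%:R * u3 ^+ 3 - 45%:R * (u2 * u3 * u4) + 9%:R * (u2 ^+ 2 * u5)) =
  y ^+ 3 * (40%:R * e3 ^+ 3 - 45%:R * (e2 * e3 * e4) + 9%:R * (e2 ^+ 2 * e5)).
Proof.
move=> h2 h3 h4 h5.
transitivity (40%:R * (q ^+ 3 * u3) ^+ 3 - 45%:R * ((q ^+ 2 * u2) * (q ^+ 3 * u3) * (q ^+ 4 * u4))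
   + 9%:R * ((q ^+ 2 * u2) ^+ 2 * (q ^+ 5 * u5))); first by ring.
rewrite h2 h3 h4 h5; ring.
Qed.
Theorem proposition4p4 (p : nat) (F : finFieldType) (K : fieldType)
    (f : {rmorphism F -> K}) (a : F) (m n : nat) (x y : K)
    (D : nat -> K -> K) :
  prime p -> (5 < p)%N -> p \in [pchar F] ->
  a != 0 -> a != -1 ->
  (0 < m)%N -> (0 < n)%N -> ~~ (p %| m * n)%N -> (m <= n)%N -> (2 < minn m n)%N ->
  transcendental_over f x ->
  f a * x ^+ n * y ^+ m + x ^+ n + y ^+ m = 1 ->
  is_hasse_wrt f x D ->
  nonclassical_wrt_conics D x y ->
  (p %| (n + 1) * (n - 1))%N /\ (p %| (m + 1) * (m - 1))%N.
Proof.
move=> pp p5 pF a0 am1 m0 n0 pmn _ _ tr E hD ncl.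
have det0 : \det (conic_wronskian D x y (fun i => i)) = 0.
  apply/eqP; apply/negPn/negP => hdet; apply: ncl => e [[inc _] min] i.
  have adm : conic_admissible D x y (fun i => i) by split.
  case: (min _ adm) => [//|[i0 [hlt hi0]]].
  move: hi0 hlt; case: i0 => [[|k] hk] //= hi0 hlt.
  have hk' : (k < 6)%N by apply: ltnW.
  have := inc (Ordinal hk') (Ordinal hk) (ltnSn k).
  rewrite (hlt (Ordinal hk')) //= => h1.
  by have := leq_ltn_trans h1 hi0; rewrite ltnn.
rewrite (wr_det y hD) in det0.
have [D0 [DD [DM [DC [D1x [Dx2 Dit]]]]]] := hD.
set Y2 := D 2%N y in det0; set Y3 := D 3%N y in det0.
set Y4 := D 4%N y in det0; set Y5 := D 5%N y in det0.
set Mg := 2%:R * Y3 ^+ 3 - 3%:R * Y2 * Y3 * Y4 + Y2 ^+ 2 * Y5 in det0.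
have pK : p \in [pchar K] := rmorph_pchar f pF.
have pn : ~~ (p %| n)%N by apply: contra pmn; apply: dvdn_mull.
have pm : ~~ (p %| m)%N by apply: contra pmn; apply: dvdn_mulr.
set N0 : F := n%:R; set M0 : F := m%:R.
have N0z : N0 != 0 := natF_neq0 pF pn.
have M0z : M0 != 0 := natF_neq0 pF pm.
have mK : (m%:R : K) != 0 := natF_neq0 pK pm.
have a1 : 1 + a != 0 by apply: contra am1; rewrite addrC addr_eq0.
have x0 : x != 0.
  by have := tr 'X (negbT (polyX_eq0 _)); rewrite map_polyX hornerX.
set s := x ^+ n.
have s0 : s != 0 by rewrite expf_neq0.
have y0 : y != 0.
  apply/negP => /eqP y0; move: E; rewrite y0 expr0n (negbTE (lt0n_neq0 m0)) mulr0 !addr0 add0r -/s => s1.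
  have : ('X^n - 1 : {poly F}) != 0.
    by apply/negP => /eqP h; have := congr1 (horner^~ 0) h; rewrite /= hornerD hornerN hornerXn expr0n (negbTE (lt0n_neq0 n0)) hornerOne horner0 sub0r => /eqP; rewrite oppr_eq0 oner_eq0.
  move/tr; rewrite rmorphB /= map_polyXn rmorph1 hornerD hornerN hornerXn hornerOne -/s s1 subrr.
  by rewrite eqxx.
pose th := fun u => x * D 1%N u.
have thD u v : th (u + v) = th u + th v by rewrite /th DD mulrDr.
have thM u v : th (u * v) = th u * v + u * th v.
  by rewrite /th DM !big_ord_recl big_ord0 /= !D0; ring.
have thC c : th (f c) = 0 by rewrite /th DC // mulr0.
have th1 : th 1 = 0 by have := thC 1; rewrite rmorph1.
have thn j : th (j%:R) = 0 by have := thC j%:R; rewrite rmorph_nat.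
have thx : th x = x by rewrite /th D1x mulr1.
have thXn k : th (x ^+ k) = k%:R * x ^+ k.
  by apply: (mulIf x0); rewrite (th_exp thM th1) thx.
have fN : f N0 = n%:R by rewrite /N0 rmorph_nat.
have hs : th s = f N0 * s by rewrite /s thXn fN.
set Qs : {poly F} := (1 - 'X) * (1 + a%:P * 'X).
set cF : F := -(N0 * (1 + a)) / M0.
have qsE : (map_poly f Qs).[s] = (1 - s) * (1 + f a * s).
  rewrite /Qs rmorphM rmorphB rmorphD /= rmorph1 rmorphM /= map_polyX map_polyC.
  hsimp; ring.
have fc : f cF = -(n%:R * (1 + f a)) / m%:R.
  by rewrite /cF fmorph_div rmorphN rmorphM rmorphD rmorph1 /N0 /M0 !rmorph_nat.
have TY : th (y ^+ m) * y = m%:R * y ^+ m * th y by rewrite (th_exp thM th1).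
have dE : f a * (n%:R * s * y ^+ m + s * th (y ^+ m)) + n%:R * s + th (y ^+ m) = 0.
  have := congr1 th E; rewrite th1 !thD !thM thC hs fN -/s => <-; ring.
have E' : f a * s * y ^+ m + s + y ^+ m - 1 = 0 by rewrite -/s E subrr.
have key : m%:R * ((1 - s) * (1 + f a * s)) * th y = - (n%:R * (1 + f a)) * s * y.
  apply/eqP; rewrite -subr_eq0; apply/eqP.
  transitivity ((1 + f a * s) * y * (f a * (n%:R * s * y ^+ m + s * th (y ^+ m)) + n%:R * s + th (y ^+ m))
     - (1 + f a * s) ^+ 2 * (th (y ^+ m) * y - m%:R * y ^+ m * th y)
     - (m%:R * (1 + f a * s) * th y + f a * n%:R * s * y) * (f a * s * y ^+ m + s + y ^+ m - 1)).
    by ring.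
  by rewrite dE TY E' subrr; ring.
have hys : (map_poly f Qs).[s] * th y = f cF * s * y.
  by rewrite qsE fc; apply: (mulfI mK); rewrite mulrA key; field.
set t := s^-1.
have t0 : t != 0 by rewrite invr_eq0.
have ht : th t = f (- N0) * t.
  have := thM s t; rewrite /t mulfV // th1 hs => h.
  apply: (mulfI s0); rewrite rmorphN.
  transitivity (- (f N0 * s * s^-1)); last by ring.
  by rewrite -[RHS]add0r h; ring.
set Qt : {poly F} := ('X - 1) * ('X + a%:P).
have qtE : (map_poly f Qt).[t] = (t - 1) * (t + f a).
  rewrite /Qt rmorphM rmorphB rmorphD /= rmorph1 map_polyX map_polyC.
  hsimp; ring.
have hyt : (map_poly f Qt).[t] * th y = f cF * t * y.
  have -> : (map_poly f Qt).[t] = t ^+ 2 * (map_poly f Qs).[s].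
    by rewrite qtE qsE /t; field.
  transitivity (t ^+ 2 * ((map_poly f Qs).[s] * th y)); first by ring.
  by rewrite hys /t; field.
pose u k := (k`!)%:R * x ^+ k * D k y.
have u0 : u 0%N = y by rewrite /u fact0 mul1r expr0 mul1r D0.
have uS k : th (u k) = k%:R * u k + u k.+1.
  have thDk : th (D k y) = k.+1%:R * (x * D k.+1 y) by rewrite /th Dit bin1 add1n; ring.
  rewrite /u !thM thn thXn thDk factS natrM exprS; ring.
have ks k := key_id thD thM thC hs hys u0 uS k.
have kt k := key_id thD thM thC ht hyt u0 uS k.
have trs := trans_Xn tr n0.
have trt := trans_inv s0 trs.
have P2z : Y2 = 0 -> Pk N0 cF Qs 2 = 0.
  move=> h; apply/eqP; apply/negPn/negP => /trs; rewrite -/s.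
  have := ks 2%N; rewrite /u -/Y2 h !mulr0 => /esym/eqP; rewrite mulf_eq0 (negbTE y0) orbF.
  by move=> ->.
have uM : 4320%:R * x ^+ 9 * Mg =
   40%:R * u 3%N ^+ 3 - 45%:R * (u 2%N * u 3%N * u 4%N) + 9%:R * (u 2%N ^+ 2 * u 5%N).
  by rewrite /u /Mg /Y2 /Y3 /Y4 /Y5 !factS fact0; ring.
have Gz : Mg = 0 -> Gp N0 cF Qs = 0 /\ Gp (- N0) cF Qt = 0.
  move=> h; split; apply/eqP; apply/negPn/negP.
    move=> /trs; rewrite -/s ev_Gp.
    have := monge_link (ks 2%N) (ks 3%N) (ks 4%N) (ks 5%N).
    rewrite -uM h !mulr0 => /esym/eqP; rewrite mulf_eq0 expf_eq0 (negbTE y0) /=.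
    by move=> ->.
  move=> /trt; rewrite -/t ev_Gp.
  have := monge_link (kt 2%N) (kt 3%N) (kt 4%N) (kt 5%N).
  rewrite -uM h !mulr0 => /esym/eqP; rewrite mulf_eq0 expf_eq0 (negbTE y0) /=.
  by move=> ->.
have Ydis : Y2 = 0 \/ Mg = 0.
  by move/eqP: det0; rewrite oppr_eq0 mulf_eq0 => /orP [] /eqP; [left | right].
split.
  apply/negPn/negP => hn.
  have hnn : ((n + 1) * (n - 1))%:R != 0 :> F := natF_neq0 pF hn.
  rewrite natrM natrD natrB // -/N0 in hnn.
  have [Np Nm] : N0 + 1 != 0 /\ N0 - 1 != 0.
    by move: hnn; rewrite mulf_eq0 negb_or => /andP.
  have [P2nz Gnz] := n_case pF p5 a0 a1 N0z M0z Np Nm.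
  case: Ydis => [/P2z h|/Gz [g1 g2]]; first by rewrite h eqxx in P2nz.
  by case: Gnz; rewrite ?g1 ?g2 eqxx.
apply/negPn/negP => hm.
have hmm : ((m + 1) * (m - 1))%:R != 0 :> F := natF_neq0 pF hm.
rewrite natrM natrD natrB // -/M0 in hmm.
have [Mp Mm] : M0 + 1 != 0 /\ M0 - 1 != 0.
  by move: hmm; rewrite mulf_eq0 negb_or => /andP.
have [P2nz Gnz] := m_case pF p5 a0 a1 N0z M0z Mp Mm.
case: Ydis => [/P2z h|/Gz [g1 g2]]; first by rewrite h eqxx in P2nz.
by rewrite g1 eqxx in Gnz.
Qed.
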